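(* Let $L$ be a complete lattice and $X$ a dcpo. There is a bijective correspondence between maps $f\colon L\to\mathcal{O}(X)$ preserving all joins and the top element and Scott continuous maps $g\colon X\to(L\setminus\{1\})^{\mathrm{op}}$, given by $$\overline{f}(x)=\bigvee\{a\in L: x\notin f(a)\},\qquad\overline{g}(a)=\{x\in X: a\not\le g(x)\};$$ in particular $\overline f(x)\ne 1$, $\overline f$ sends directed joins in $X$ to meets in $L$, and $\overline g(a)$ is Scott open with $\overline g(1)=X$. The monad on $\mathbf{Dcpo}$ induced by the resulting adjunction is isomorphic to the Hoare power domain $\mathcal{H}$, where $\mathcal{H}(X)$ is the set of non-empty Scott closed subsets of $X$ ordered by inclusion, $\mathcal{H}(f)(U)$ is the closure of $f(U)$, the unit is $x\mapsto{\downarrow}x$ and the multiplication is $A\mapsto\overline{\bigcup A}$ (closure of the union). Under this correspondence a Kleisli map $g\colon X\to\mathcal{H}(Y)$ corresponds to the predicate transformer $\mathcal{O}(Y)\to\mathcal{O}(X)$, $V\mapsto\{x: V\cap g(x)\ne\emptyset\}$.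
   Context: For a dcpo $X$, $\mathcal{O}(X)$ is the complete lattice of Scott open subsets (upsets $U$ such that any directed join in $U$ has some member of the directed set in $U$), ordered by inclusion; Scott closed sets are their complements; ${\downarrow}x=\{y:y\le x\}$. $(L\setminus\{1\})^{\mathrm{op}}$ is $L$ minus its top with reversed order, a dcpo with directed joins given by meets in $L$. $\mathbf{Dcpo}$ is the category of dcpos and Scott continuous maps. *)

(* Defs.v *)
(* dcpos and complete lattices as order relations on types,
   subsets as predicates. *)
From Stdlib Require Import Classical.

Definition incl {A : Type} (U V : A -> Prop) : Prop := forall x, U x -> V x.

Definition image {A B : Type} (f : A -> B) (D : A -> Prop) : B -> Prop :=
  fun y => exists x, D x /\ f x = y.

Definition is_lub {A : Type} (P : A -> Prop) (le : A -> A -> Prop)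
  (S : A -> Prop) (s : A) : Prop :=
  P s /\ (forall x, S x -> le x s) /\
  (forall u, P u -> (forall x, S x -> le x u) -> le s u).

Definition directed {A : Type} (P : A -> Prop) (le : A -> A -> Prop)
  (D : A -> Prop) : Prop :=
  (exists d, D d) /\ (forall d, D d -> P d) /\
  (forall d e, D d -> D e -> exists f, D f /\ le d f /\ le e f).

Definition is_dcpo {A : Type} (P : A -> Prop) (le : A -> A -> Prop) : Prop :=
  (forall x, P x -> le x x) /\
  (forall x y z, P x -> P y -> P z -> le x y -> le y z -> le x z) /\
  (forall x y, P x -> P y -> le x y -> le y x -> x = y) /\
  (forall D, directed P le D -> exists s, is_lub P le D s).

Definition scott_cont {A B : Type} (PA : A -> Prop) (leA : A -> A -> Prop)
  (PB : B -> Prop) (leB : B -> B -> Prop) (f : A -> B) : Prop :=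
  (forall x, PA x -> PB (f x)) /\
  (forall D s, directed PA leA D -> is_lub PA leA D s ->
     is_lub PB leB (image f D) (f s)).

Definition scott_open {A : Type} (P : A -> Prop) (le : A -> A -> Prop)
  (U : A -> Prop) : Prop :=
  (forall x, U x -> P x) /\
  (forall x y, P x -> P y -> U x -> le x y -> U y) /\
  (forall D s, directed P le D -> is_lub P le D s -> U s ->
     exists d, D d /\ U d).

Definition scott_closed {A : Type} (P : A -> Prop) (le : A -> A -> Prop)
  (C : A -> Prop) : Prop :=
  (forall x, C x -> P x) /\ scott_open P le (fun x => P x /\ ~ C x).

Record clat := {
  ct :> Type;
  cle : ct -> ct -> Prop;
  cjoin : (ct -> Prop) -> ct;
  cle_refl : forall x, cle x x;
  cle_trans : forall x y z, cle x y -> cle y z -> cle x z;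
  cle_antisym : forall x y, cle x y -> cle y x -> x = y;
  cjoin_lub : forall S, is_lub (fun _ => True) cle S (cjoin S)
}.

Definition ctop (L : clat) : L := cjoin L (fun _ => True).

Definition join_top_pres (L : clat) {A : Type} (P : A -> Prop)
  (le : A -> A -> Prop) (f : L -> A -> Prop) : Prop :=
  (forall a, scott_open P le (f a)) /\
  (forall (S : L -> Prop) x, f (cjoin L S) x <-> exists a, S a /\ f a x) /\
  (forall x, f (ctop L) x <-> P x).

Definition cont_to_Lop (L : clat) {A : Type} (P : A -> Prop)
  (le : A -> A -> Prop) (g : A -> L) : Prop :=
  scott_cont P le (fun a => a <> ctop L) (fun a b => cle L b a) g.

Definition fbar (L : clat) {A : Type} (f : L -> A -> Prop) (x : A) : L :=
  cjoin L (fun a => ~ f a x).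

Definition gbar (L : clat) {A : Type} (P : A -> Prop) (g : A -> L)
  (a : L) : A -> Prop :=
  fun x => P x /\ ~ cle L a (g x).

(* T(X) = (O(X) \ {X})^op : proper Scott opens, reverse inclusion *)
Definition Tcar {A : Type} (P : A -> Prop) (le : A -> A -> Prop)
  (U : A -> Prop) : Prop :=
  scott_open P le U /\ exists x, P x /\ ~ U x.

Definition Tle {A : Type} (U V : A -> Prop) : Prop := incl V U.

(* unit: eta_X = fbar(id_{O X}), x |-> \/ {U in O X | x notin U} *)
Definition etaT {A : Type} (P : A -> Prop) (le : A -> A -> Prop)
  (x : A) : A -> Prop :=
  fun y => exists U, scott_open P le U /\ ~ U x /\ U y.

(* action on h : X -> Y: R(O h)(U) = \/ {V in O Y | O(h)(V) <= U} *)
Definition Tmap {A B : Type} (PA : A -> Prop) (PB : B -> Prop)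
  (leB : B -> B -> Prop) (h : A -> B) (U : A -> Prop) : B -> Prop :=
  fun y => exists V, scott_open PB leB V /\
    incl (fun x => PA x /\ V (h x)) U /\ V y.

(* multiplication: mu_X = R(eps_{O X}), where
   eps_L = gbar(id_{R L}) : a |-> {u in R L | ~ a <= u},
   R(k)(m) = \/ {a | k a <= m} *)
Definition muT {A : Type} (P : A -> Prop) (le : A -> A -> Prop)
  (UU : (A -> Prop) -> Prop) : A -> Prop :=
  fun x => exists V, scott_open P le V /\
    incl (fun U => Tcar P le U /\ ~ incl V U) UU /\ V x.

Definition Hcar {A : Type} (P : A -> Prop) (le : A -> A -> Prop)
  (C : A -> Prop) : Prop :=
  scott_closed P le C /\ exists x, C x.

Definition closure {A : Type} (P : A -> Prop) (le : A -> A -> Prop)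
  (S : A -> Prop) : A -> Prop :=
  fun y => P y /\ forall C, scott_closed P le C -> incl S C -> C y.

Definition Hmap {A B : Type} (PB : B -> Prop) (leB : B -> B -> Prop)
  (h : A -> B) (C : A -> Prop) : B -> Prop :=
  closure PB leB (image h C).

Definition etaH {A : Type} (P : A -> Prop) (le : A -> A -> Prop)
  (x : A) : A -> Prop :=
  fun y => P y /\ le y x.

Definition muH {A : Type} (P : A -> Prop) (le : A -> A -> Prop)
  (AA : (A -> Prop) -> Prop) : A -> Prop :=
  closure P le (fun x => exists C, AA C /\ C x).

(* Main.v *)
Require Import Defs.
From Stdlib Require Import Classical Setoid FunctionalExtensionality PropExtensionality.

Lemma pext {A} (U V : A -> Prop) : (forall x, U x <-> V x) -> U = V.
Proof. intro H; apply functional_extensionality; intro x; apply propositional_extensionality; auto. Qed.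

Lemma le_join (L : clat) (S : L -> Prop) a : S a -> cle L a (cjoin L S).
Proof. intro H. destruct (cjoin_lub L S) as [_ [H1 _]]. auto. Qed.
Lemma join_least (L:clat) S u : (forall a, S a -> cle L a u) -> cle L (cjoin L S) u.
Proof. intro H. destruct (cjoin_lub L S) as [_ [_ H2]]. apply H2; auto. Qed.
Lemma top_max (L : clat) a : cle L a (ctop L). Proof. apply le_join; exact I. Qed.
Lemma top_eq (L : clat) a : cle L (ctop L) a -> a = ctop L.
Proof. intro; apply cle_antisym; auto using top_max. Qed.

Lemma jtp_mono (L : clat) A P le f (Hf : @join_top_pres L A P le f) a b x :
  cle L a b -> f a x -> f b x.
Proof.
 intros Hab Ha. destruct Hf as [_ [Hj _]].
 assert (E : cjoin L (fun c => c = a \/ c = b) = b).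
 { apply cle_antisym. apply join_least. intros c [-> | ->]; auto using cle_refl.
   apply le_join; auto. }
 rewrite <- E. apply Hj. exists a; auto.
Qed.

Lemma fbar_char (L : clat) A P le f (Hf: @join_top_pres L A P le f) a x :
  cle L a (fbar L f x) <-> ~ f a x.
Proof. split.
 - intros H Hfa. pose proof (jtp_mono L A P le f Hf _ _ x H Hfa) as H2. unfold fbar in H2.
   destruct Hf as [_ [Hj _]]. apply Hj in H2. destruct H2 as [c [Hc1 Hc2]]. contradiction.
 - intro H. unfold fbar. apply le_join. exact H.
Qed.

Lemma g_mono (L : clat) A P le g (Hd : is_dcpo P le) (Hg : @cont_to_Lop L A P le g) x y :
  P x -> P y -> le x y -> cle L (g y) (g x).
Proof.
 intros Px Py Hxy. destruct Hd as [Hr _]. destruct Hg as [_ Hc].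
 assert (Hdir : directed P le (fun z => z = x \/ z = y)).
 { split. exists x; auto. split. intros d [-> | ->]; auto.
   intros d e Hd' He. exists y. split; [right; reflexivity|].
   split; [destruct Hd' as [-> | ->]; auto | destruct He as [-> | ->]; auto]. }
 assert (Hlub : is_lub P le (fun z => z = x \/ z = y) y).
 { split; [auto|]. split. intros z [-> | ->]; auto. intros u Pu Hu. apply Hu; auto. }
 destruct (Hc _ _ Hdir Hlub) as [_ [Hup _]].
 exact (Hup (g x) (ex_intro _ x (conj (or_introl eq_refl) eq_refl))).
Qed.

Lemma p1a (L : clat) A P le f : @join_top_pres L A P le f -> cont_to_Lop L P le (fbar L f).
Proof.
 intro Hf. pose proof Hf as [Hop [Hj Ht]].
 assert (Hnt : forall x, P x -> fbar L f x <> ctop L).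
 { intros x Px E. assert (H1 : f (ctop L) x) by (apply Ht; auto). rewrite <- E in H1.
   apply (proj1 (fbar_char L A P le f Hf (fbar L f x) x) (cle_refl L _)). exact H1. }
 split; [exact Hnt|].
 intros D s Hdir Hlub. pose proof Hlub as [Ps [Hub Hle]]. pose proof Hdir as [_ [HDP _]].
 split; [apply Hnt; auto|]. split.
 - intros y [d [Dd <-]]. simpl. apply (fbar_char L A P le f Hf). intro H.
   destruct (Hop (fbar L f s)) as [_ [Hupc _]].
   apply (proj1 (fbar_char L A P le f Hf (fbar L f s) s) (cle_refl L _)).
   apply (Hupc d s); auto.
 - intros u Hu Hlow. simpl. apply (fbar_char L A P le f Hf). intro H.
   destruct (Hop u) as [_ [_ Hdc]].
   destruct (Hdc D s Hdir Hlub H) as [d [Dd Hfd]].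
   apply (proj1 (fbar_char L A P le f Hf u d) (Hlow (fbar L f d) (ex_intro _ d (conj Dd eq_refl)))).
   exact Hfd.
Qed.

Lemma p1b (L : clat) A P le g : is_dcpo P le -> @cont_to_Lop L A P le g ->
  join_top_pres L P le (gbar L P g).
Proof.
 intros Hd Hg. pose proof Hg as [Hnt Hc].
 split; [|split].
 - intro a. split; [|split].
   + intros x [Px _]; exact Px.
   + intros x y Px Py [_ Hx] Hxy. split; [exact Py|]. intro Hay. apply Hx.
     eapply cle_trans; [exact Hay | apply (g_mono L A P le g Hd Hg); auto].
   + intros D s Hdir Hlub [Ps Has]. apply NNPP. intro Hno. apply Has.
     assert (Hall : forall d, D d -> cle L a (g d)).
     { intros d Dd. apply NNPP. intro Hn. apply Hno. exists d. split; auto. split; auto.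
       destruct Hdir as [_ [HDP _]]; auto. }
     destruct (classic (a = ctop L)) as [Ea|Ea].
     * destruct Hdir as [[d Dd] [HDP _]]. exfalso.
       assert (Hn := Hnt d (HDP d Dd)). simpl in Hn. apply Hn. apply top_eq. rewrite <- Ea. auto.
     * destruct (Hc D s Hdir Hlub) as [_ [_ Hgl]]. apply (Hgl a Ea).
       intros y [d [Dd <-]]. simpl; auto.
 - intros S x. unfold gbar. split.
   + intros [Px Hn]. apply NNPP. intro Hno. apply Hn. apply join_least. intros a Sa.
     apply NNPP. intro Hna. apply Hno. exists a. auto.
   + intros [a [Sa [Px Hna]]]. split; auto. intro Hj. apply Hna.
     eapply cle_trans; [apply le_join; exact Sa | exact Hj].
 - intros x. unfold gbar. split; [intros [Px _]; auto|]. intro Px. split; auto.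
   intro H. assert (Hn := Hnt x Px). simpl in Hn. apply Hn. apply top_eq; auto.
Qed.

Lemma p1c (L : clat) A P le f : @join_top_pres L A P le f ->
  forall a x, gbar L P (fbar L f) a x <-> f a x.
Proof.
 intros Hf a x. unfold gbar. split.
 - intros [Px Hn]. apply NNPP. intro H. apply Hn. apply (fbar_char L A P le f Hf). exact H.
 - intro H. split.
   + destruct Hf as [Hop _]. destruct (Hop a) as [H1 _]; auto.
   + intro Hc. apply (fbar_char L A P le f Hf) in Hc. auto.
Qed.

Lemma p1d (L : clat) A P le g : @cont_to_Lop L A P le g ->
  forall x, P x -> fbar L (gbar L P g) x = g x.
Proof.
 intros Hg x Px. unfold fbar, gbar. apply cle_antisym.
 - apply join_least. intros a Ha. apply NNPP. intro Hn. apply Ha. auto.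
 - apply le_join. intros [_ H]. apply H. apply cle_refl.
Qed.

Definition phiH {A} (P : A->Prop) (le: A->A->Prop) (U : A -> Prop) : A -> Prop :=
  fun x => P x /\ ~ U x.

Lemma so_ext A P le (U V : A -> Prop) : scott_open P le U -> (forall x, U x <-> V x) -> scott_open P le V.
Proof. intros H E. replace V with U; [auto| apply pext; auto]. Qed.

Lemma closed_of_open A P le (U : A -> Prop) : scott_open P le U -> scott_closed P le (fun x => P x /\ ~ U x).
Proof.
 intro H. split. intros x [Px _]; auto. apply (so_ext _ _ _ U); auto. intro x.
 destruct H as [Hs _]. split. intro Ux. split; auto. intros [_ Hn]; auto.
 intros [Px Hn]. apply NNPP; intro; apply Hn; auto.
Qed.

Lemma closure_in A P le (S : A->Prop) y : P y -> S y -> closure P le S y.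
Proof. intros Py Sy. split; [exact Py|]. intros C _ HC. apply HC; auto. Qed.

Lemma closure_char A P le (S: A -> Prop) : (forall z, S z -> P z) -> forall y,
  closure P le S y <-> P y /\ (forall V, scott_open P le V -> V y -> exists z, S z /\ V z).
Proof.
 intros HS y. split.
 - intros [Py Hc]. split; auto. intros V HV Vy. apply NNPP; intro Hno.
   assert (HC := Hc _ (closed_of_open A P le V HV)).
   destruct (HC (fun z Sz => conj (HS z Sz) (fun Vz => Hno (ex_intro _ z (conj Sz Vz))))) as [_ Hn].
   auto.
 - intros [Py Hv]. split; auto. intros C HC HSC. apply NNPP. intro Cy. destruct HC as [_ Hop].
   destruct (Hv _ Hop (conj Py Cy)) as [z [Sz [_ Hn]]]. apply Hn. apply HSC; auto.
Qed.

Lemma meets_open A P le (V : A -> Prop) : scott_open P le V ->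
  scott_open (Hcar P le) incl (fun C => Hcar P le C /\ exists z, C z /\ V z).
Proof.
 intro HV. split; [|split].
 - intros C [H _]; auto.
 - intros C C' _ HC' [_ [z [Cz Vz]]] Hi. split; auto. exists z; auto.
 - intros D s Hdir Hlub [Hs [z [sz Vz]]]. apply NNPP; intro Hno.
   destruct Hdir as [[d Dd] [HDH _]].
   destruct Hlub as [_ [_ Hleast]].
   assert (Hsub : forall d, D d -> forall y, d y -> P y /\ ~ V y).
   { intros d' Dd' y dy. destruct (HDH d' Dd') as [[HP _] _]. split; auto. intro Vy.
     apply Hno. exists d'. split; auto. split; auto. exists y; auto. }
   assert (HK : Hcar P le (fun y => P y /\ ~ V y)).
   { split. apply closed_of_open; auto. destruct (HDH d Dd) as [_ [w dw]]. exists w.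
     apply (Hsub d Dd w dw). }
   assert (Hi : incl s (fun y => P y /\ ~ V y)).
   { apply Hleast; [exact HK|]. intros d' Dd'. exact (Hsub d' Dd'). }
   destruct (Hi z sz) as [_ Hn]; auto.
Qed.

Lemma down_open A P le (x : A) : is_dcpo P le -> P x -> scott_open P le (fun z => P z /\ ~ le z x).
Proof.
 intros Hd Px. destruct Hd as [Hr [Ht _]]. split; [|split].
 - intros z [Pz _]; auto.
 - intros z w Pz Pw [_ Hz] Hzw. split; auto. intro Hw. apply Hz. apply (Ht z w x); auto.
 - intros D s Hdir Hlub [Ps Hs]. apply NNPP; intro Hno. apply Hs. destruct Hlub as [_ [_ Hl]].
   apply Hl; auto. intros d Dd. apply NNPP; intro Hn. apply Hno. exists d. split; auto.
   split; auto. destruct Hdir as [_ [HDP _]]; auto.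
Qed.

Lemma phiH_Hcar A P le (U : A -> Prop) : Tcar P le U -> Hcar P le (phiH P le U).
Proof. intros [HU [x [Px Ux]]]. split. apply closed_of_open; auto. exists x. split; auto. Qed.

Theorem mainTheorem9 :
  (* the bijective correspondence *)
  (forall (L : clat) (A : Type) (P : A -> Prop) (le : A -> A -> Prop),
     is_dcpo P le ->
     (forall f, join_top_pres L P le f -> cont_to_Lop L P le (fbar L f)) /\
     (forall g, cont_to_Lop L P le g -> join_top_pres L P le (gbar L P g)) /\
     (forall f, join_top_pres L P le f ->
        forall a x, gbar L P (fbar L f) a x <-> f a x) /\
     (forall g, cont_to_Lop L P le g ->
        forall x, P x -> fbar L (gbar L P g) x = g x))
  /\
  (* the induced monad T is isomorphic to the Hoare power domain H *)
  (exists phi : forall A : Type, (A -> Prop) -> (A -> A -> Prop) ->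
                  (A -> Prop) -> (A -> Prop),
     (* each phi_X is an isomorphism of dcpos T(X) ~ H(X) *)
     (forall (A : Type) (P : A -> Prop) (le : A -> A -> Prop), is_dcpo P le ->
        (forall U, Tcar P le U -> Hcar P le (phi A P le U)) /\
        (forall C, Hcar P le C -> exists U, Tcar P le U /\ phi A P le U = C) /\
        (forall U V, Tcar P le U -> Tcar P le V ->
           (Tle U V <-> incl (phi A P le U) (phi A P le V)))) /\
     (* naturality *)
     (forall (A : Type) (PA : A -> Prop) (leA : A -> A -> Prop)
             (B : Type) (PB : B -> Prop) (leB : B -> B -> Prop) (h : A -> B),
        is_dcpo PA leA -> is_dcpo PB leB -> scott_cont PA leA PB leB h ->
        forall U, Tcar PA leA U ->
          phi B PB leB (Tmap PA PB leB h U) = Hmap PB leB h (phi A PA leA U)) /\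
     (* compatibility with the units *)
     (forall (A : Type) (P : A -> Prop) (le : A -> A -> Prop), is_dcpo P le ->
        forall x, P x -> phi A P le (etaT P le x) = etaH P le x) /\
     (* compatibility with the multiplications *)
     (forall (A : Type) (P : A -> Prop) (le : A -> A -> Prop), is_dcpo P le ->
        forall UU, Tcar (Tcar P le) Tle UU ->
          phi A P le (muT P le UU) =
          muH P le (Hmap (Hcar P le) incl (phi A P le)
                      (phi (A -> Prop) (Tcar P le) Tle UU))) /\
     (* Kleisli maps X -> H(Y) correspond to V |-> {x | V meets g(x)} *)
     (forall (A : Type) (PA : A -> Prop) (leA : A -> A -> Prop)
             (B : Type) (PB : B -> Prop) (leB : B -> B -> Prop)
             (g : A -> (B -> Prop)) (k : A -> (B -> Prop)),
        is_dcpo PA leA -> is_dcpo PB leB ->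
        scott_cont PA leA (Hcar PB leB) incl g ->
        (forall x, PA x -> Tcar PB leB (k x) /\ phi B PB leB (k x) = g x) ->
        forall V, scott_open PB leB V ->
          forall x,
            ((PA x /\ ~ incl V (k x)) <-> (PA x /\ exists y, V y /\ g x y)))).
Proof.
 split.
 - intros L A P le Hd. split; [|split; [|split]].
   + intros f Hf; apply p1a; auto.
   + intros g Hg; apply p1b; auto.
   + intros f Hf; apply (p1c L A P le f Hf).
   + intros g Hg; apply (p1d L A P le g Hg).
 - exists (@phiH). split; [|split; [|split; [|split]]].
   + intros A P le Hd. split; [|split].
     * intros U HU. apply phiH_Hcar; auto.
     * intros C [HC [x Cx]]. exists (fun x => P x /\ ~ C x). split.
       -- split. exact (proj2 HC). exists x. split. exact (proj1 HC x Cx). intros [_ Hn]; auto.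
       -- apply pext. intro y. unfold phiH. split.
          ++ intros [Py Hn]. apply NNPP. intro Cy. apply Hn. auto.
          ++ intro Cy. split. exact (proj1 HC y Cy). intros [_ Hn]; auto.
     * intros U V [HU _] [HV _]. unfold Tle, incl, phiH. split.
       -- intros H x [Px Ux]. split; auto.
       -- intros H x Vx. apply NNPP. intro Ux. destruct HV as [HVP _].
          destruct (H x (conj (HVP x Vx) Ux)) as [_ Hn]; auto.
   + intros A PA leA B PB leB h HdA HdB Hh U HU. unfold Hmap. apply pext. intro y.
     rewrite closure_char.
     2: { intros z [x [[PAx _] <-]]. apply (proj1 Hh); auto. }
     unfold phiH. split.
     * intros [Py Hn]. split; auto. intros V HV Vy. apply NNPP; intro Hno. apply Hn.
       exists V. split; auto. split; auto. intros x [PAx Vhx]. apply NNPP; intro Ux.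
       apply Hno. exists (h x). split; auto. exists x; auto.
     * intros [Py Hv]. split; auto. intros [V [HV [Hi Vy]]].
       destruct (Hv V HV Vy) as [z [[x [[PAx Ux] <-]] Vz]]. apply Ux. apply Hi. split; auto.
   + intros A P le Hd x Px. unfold phiH, etaH. apply pext; intro y. split.
     * intros [Py Hn]. split; auto. apply NNPP; intro Hyx. apply Hn.
       exists (fun z => P z /\ ~ le z x). split; [apply down_open; auto|]. split.
       -- intros [_ H]. apply H. destruct Hd as [Hr _]; auto.
       -- split; auto.
     * intros [Py Hyx]. split; auto. intros [U [HU [Ux Uy]]]. apply Ux.
       destruct HU as [_ [Hup _]]. apply (Hup y x); auto.
   + intros A P le Hd UU HUU. unfold muH, Hmap. apply pext; intro x.
     rewrite closure_char.
     2: { intros z [C [[HC _] Cz]]. destruct HC as [[HCP _] _]; auto. }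
     split.
     * intros [Px Hn]. split; auto. intros V HV Vx. apply NNPP; intro Hno. apply Hn.
       exists V. split; auto. split; auto.
       intros U [TU Hni]. apply NNPP; intro HnU. apply Hni. intros z Vz. apply NNPP; intro Uz.
       apply Hno. exists z. split; auto. exists (phiH P le U). split.
       -- apply closure_in. apply phiH_Hcar; auto. exists U. split; [split; auto|reflexivity].
       -- unfold phiH; split; auto. destruct HV as [HVP _]; auto.
     * intros [Px Hv]. split; auto. intros [V [HV [Hi Vx]]].
       destruct (Hv V HV Vx) as [z [[C [HC Cz]] Vz]].
       rewrite closure_char in HC.
       2: { intros C' [U [[TU _] <-]]. apply phiH_Hcar; auto. }
       destruct HC as [HCH Hw].
       destruct (Hw _ (meets_open A P le V HV) (conj HCH (ex_intro _ z (conj Cz Vz))))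
         as [C' [[U [[TU HnU] <-]] [_ [w [[Pw Uw] Vw]]]]].
       apply HnU. apply Hi. split; [exact TU|]. intro Hinc. apply Uw. apply Hinc; auto.
   + intros A PA leA B PB leB g k HdA HdB Hg Hk V HV x. split.
     * intros [Px Hn]. split; auto. destruct (Hk x Px) as [_ E]. apply NNPP; intro Hno.
       apply Hn. intros y Vy. apply NNPP; intro ky. apply Hno. exists y. split; auto.
       rewrite <- E. unfold phiH. split; auto. destruct HV as [HVP _]; auto.
     * intros [Px [y [Vy gy]]]. split; auto. destruct (Hk x Px) as [_ E]. rewrite <- E in gy.
       unfold phiH in gy. destruct gy as [_ nk]. intro Hi. apply nk. auto.
Qed.
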